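(* Let $M_1,\dots,M_N$ be matrices in $\mathbb C^{d\times nd}$. Let $\lambda_1,\dots,\lambda_{nd}$ be the eigenvalues of $\sum_{j}M_j^\ast M_j$ and $\nu_1,\dots,\nu_d$ the eigenvalues of $\sum_j M_jM_j^\ast$. Then $\sum_{i=1}^{nd}\lambda_i=\sum_{j=1}^d\nu_j$. Furthermore, if $\max_i\lambda_i\le\frac1d\sum_{j=1}^d\nu_j$, then for every integer $p\ge2$, \[ \Big\|\Big(\sum_j M_jM_j^\ast\Big)^{1/2}\Big\|_{S_{2p}}^{2p}\ge\Big\|\Big(\sum_j M_j^\ast M_j\Big)^{1/2}\Big\|_{S_{2p}}^{2p}. \]
   Context: $A^\ast$ is the conjugate transpose. For a matrix $A$, the Schatten $p$-norm is $\|A\|_{S_p}=\big(\mathrm{tr}\,(A^\ast A)^{p/2}\big)^{1/p}$. *)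

(* Defs.v *)
From HB Require Import structures.
From mathcomp Require Import all_boot all_order all_algebra.
Set Implicit Arguments. Unset Strict Implicit. Unset Printing Implicit Defensive.
Import Order.TTheory GRing.Theory Num.Theory.
Local Open Scope ring_scope.
Local Open Scope sesquilinear_scope.

(* Complex numbers: an arbitrary numClosedFieldType C
   (e.g. complex R for R : realType); M ^t* is the conjugate transpose. *)

Definition psdmx (C : numClosedFieldType) (m : nat) (A : 'M[C]_m) : Prop :=
  A \is hermsymmx /\ forall v : 'rV[C]_m, 0 <= (v *m A *m v ^t*) 0 0.

Definition is_psd_sqrt (C : numClosedFieldType) (m : nat) (Y A : 'M[C]_m) : Prop :=
  psdmx Y /\ Y *m Y = A.

(* ||X||_{S_{2p}}^{2p} = tr ((X^* X)^{p}) : the Schatten (2p)-norm raised to the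
   power 2p, with (X^*X)^{2p/2} = (X^*X)^p an integer matrix power *)
Definition schatten_2p_pow (C : numClosedFieldType) (m : nat) (p : nat) (X : 'M[C]_m) : C :=
  \tr ((X ^t* *m X) ^+ p).

(* Main.v *)
Require Import Defs.
From HB Require Import structures.
From mathcomp Require Import all_boot all_order all_algebra.
From mathcomp Require Import ring.
Import Order.TTheory GRing.Theory Num.Theory.
Local Open Scope ring_scope.
Local Open Scope sesquilinear_scope.
Set Implicit Arguments. Unset Strict Implicit.
Lemma tangent_ineq (R : numDomainType) (b c : R) (k : nat) :
  0 <= b -> 0 <= c ->
  c ^+ k.+1 + k.+1%:R * c ^+ k * (b - c) <= b ^+ k.+1.
Proof.
move=> b0 c0; elim: k => [|k IH].
  by rewrite expr0 mulr1 !expr1 mul1r addrC subrK.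
have sq : 0 <= (b - c) ^+ 2.
  by apply: real_exprn_even_ge0 => //; rewrite realB // ger0_real.
have s0 : 0 <= k.+1%:R * c ^+ k * (b - c) ^+ 2.
  by rewrite mulr_ge0 // mulr_ge0 // exprn_ge0.
apply: (le_trans _ (ler_wpM2l b0 IH)).
have -> : b * (c ^+ k.+1 + k.+1%:R * c ^+ k * (b - c)) =
   c ^+ k.+2 + k.+2%:R * c ^+ k.+1 * (b - c) + k.+1%:R * c ^+ k * (b - c) ^+ 2.
  rewrite !exprS -[k.+2]addn1 -[k.+1]addn1 !natrD; ring.
by rewrite lerDl.
Qed.
Lemma scalar_main (R : numFieldType) (m d : nat) (lam : 'I_m -> R) (nu : 'I_d -> R) (p : nat) :
  (2 <= p)%N -> (forall i, 0 <= lam i) -> (forall j, 0 <= nu j) ->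
  \sum_i lam i = \sum_j nu j ->
  (forall i, lam i <= d%:R^-1 * \sum_j nu j) ->
  \sum_i lam i ^+ p <= \sum_j nu j ^+ p.
Proof.
case: p => [//|k] hk lam0 nu0 ht hle.
set t := \sum_j nu j; set c := d%:R^-1 * t.
have t0 : 0 <= t by rewrite sumr_ge0.
have c0 : 0 <= c by rewrite mulr_ge0 // invr_ge0 ler0n.
have up : \sum_i lam i ^+ k.+1 <= t * c ^+ k.
  rewrite {1}(_ : t = \sum_i lam i) // mulr_suml; apply: ler_sum => i _.
  rewrite exprS ler_wpM2l //; apply: lerXn2r; rewrite ?nnegrE //; exact: hle.
have low : \sum_j (c ^+ k.+1 + k.+1%:R * c ^+ k * (nu j - c)) <= \sum_j nu j ^+ k.+1.
  by apply: ler_sum => j _; apply: tangent_ineq.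
apply: (le_trans up); apply: le_trans low.
rewrite big_split /= -mulr_sumr sumrB sumr_const card_ord -/t.
rewrite sumr_const card_ord.
case: (posnP d) => [d0|dn0].
  rewrite /c d0 invr0 mul0r; case: k {up} hk => [//|k] _.
  by rewrite !expr0n /= !mulr0 mulr0n mul0r add0r.
have e : c *+ d = t by rewrite /c -mulr_natl mulrA divff ?mul1r // pnatr_eq0 -lt0n.
rewrite e subrr mulr0 addr0 exprS -mulrnAl e.
by [].
Qed.
Lemma char_poly_sim (R : comUnitRingType) n (P D : 'M[R]_n) :
  P \in unitmx -> char_poly (invmx P *m D *m P) = char_poly D.
Proof.
move=> Pu; rewrite /char_poly /char_poly_mx.
have -> : 'X%:M - map_mx polyC (invmx P *m D *m P) =
   map_mx polyC (invmx P) *m ('X%:M - map_mx polyC D) *m map_mx polyC P.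
  rewrite mulmxBr mulmxBl !map_mxM; congr (_ - _).
  by rewrite scalar_mxC -mulmxA -map_mxM mulVmx // map_mx1 mulmx1.
rewrite !det_mulmx mulrC mulrA -det_mulmx -map_mxM mulmxV // map_mx1 det1 mul1r.
by [].
Qed.

Lemma mx_pow_sim (R : comUnitRingType) n (P D : 'M[R]_n) k :
  P \in unitmx -> (invmx P *m D *m P) ^+ k = invmx P *m D ^+ k *m P.
Proof.
move=> Pu; elim: k => [|k IH].
  by rewrite !expr0 mulmx1 mulVmx.
rewrite exprSr IH -!mulmxE !mulmxA mulmxK // -[_ *m D ^+ k *m D]mulmxA mulmxE -exprSr.
by [].
Qed.

Lemma diag_pow (R : comPzRingType) n (D : 'rV[R]_n) k :
  diag_mx D ^+ k = diag_mx (\row_j (D 0 j ^+ k)).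
Proof.
elim: k => [|k IH].
  by apply/matrixP => i j; rewrite expr0 !mxE; case: (i == j).
rewrite exprSr IH -mulmxE mulmx_diag; congr diag_mx; apply/rowP => j.
by rewrite !mxE exprSr.
Qed.
Lemma spec_facts (C : numClosedFieldType) m (A : 'M[C]_m) (lam : 'I_m -> C) :
  A \is hermsymmx -> (forall v : 'rV_m, 0 <= (v *m A *m v ^t*) 0 0) ->
  char_poly A = \prod_i ('X - (lam i)%:P) ->
  (forall i, 0 <= lam i) /\ (forall k, \tr (A ^+ k) = \sum_i lam i ^+ k).
Proof.
move=> Ah Apsd hchar.
have /orthomx_spectralP hA := hermitian_normalmx Ah.
have Pun : spectralmx A \is unitarymx := spectral_unitarymx A.
move: hA Pun; set P := spectralmx A; set D := spectral_diag A => hA Pun.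
have Pu : P \in unitmx := unitarymx_unit Pun.
have hperm : perm_eq [seq lam i | i <- index_enum 'I_m] [seq D 0 i | i <- index_enum 'I_m].
  apply: prod_XsubC_eq; rewrite !big_map -hchar hA char_poly_sim // char_poly_trig ?diag_mx_is_trig //.
  by apply: eq_bigr => i _; rewrite mxE eqxx mulr1n.
have PP : forall k (X : 'M[C]_(k, m)), X *m P *m P^t* = X.
  by move=> k X; rewrite -mulmxA (unitarymxP Pun) mulmx1.
have Dge0 : forall j, 0 <= D 0 j.
  move=> j; have := Apsd ('e_j *m P).
  rewrite {1}hA invmx_unitary // trmx_mul map_mxM !mulmxA !PP -rowE row_diag_mx -scalemxAl.
  have -> : ('e_j : 'rV[C]_m)^t* = delta_mx j 0.
    by apply/matrixP => a b; rewrite !mxE conjC_nat andbC.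
  rewrite !mxE (bigD1 j) //= big1 ?addr0 ?mxE ?eqxx ?mulr1 //.
  by move=> k /negbTE nkj; rewrite !mxE nkj mul0r.
have htr : forall k, \tr (A ^+ k) = \sum_i D 0 i ^+ k.
  move=> k; rewrite hA mx_pow_sim // mxtrace_mulC mulmxA mulmxV // mul1mx diag_pow mxtrace_diag.
  by apply: eq_bigr => i _; rewrite mxE.
split.
  move=> i; have : lam i \in [seq lam i | i <- index_enum 'I_m].
    by apply: map_f; rewrite mem_index_enum.
  by rewrite (perm_mem hperm) => /mapP [j _ ->]; exact: Dge0.
move=> k; rewrite htr.
rewrite -(big_map (fun i => D 0 i) xpredT (fun x => x ^+ k)).
rewrite -(big_map lam xpredT (fun x => x ^+ k)).
by apply/perm_big; rewrite perm_sym.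
Qed.
Lemma gram_ge0 (C : numClosedFieldType) n (u : 'M[C]_(1, n)) : 0 <= (u *m u^t*) 0 0.
Proof.
rewrite mxE; apply: sumr_ge0 => k _; rewrite !mxE; exact: mul_conjC_ge0.
Qed.

Lemma gram_sum_herm (C : numClosedFieldType) N k m (X : 'I_N -> 'M[C]_(k, m)) :
  \sum_j (X j)^t* *m X j \is hermsymmx.
Proof.
apply/is_hermitianmxP; rewrite expr0 scale1r; apply/matrixP => a b.
rewrite !mxE !summxE rmorph_sum; apply: eq_bigr => j _.
rewrite !mxE rmorph_sum; apply: eq_bigr => i _.
by rewrite !mxE rmorphM /= conjCK mulrC.
Qed.

Lemma gram_sum_psd (C : numClosedFieldType) N k m (X : 'I_N -> 'M[C]_(k, m)) (v : 'rV[C]_m) :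
  0 <= (v *m (\sum_j (X j)^t* *m X j) *m v^t*) 0 0.
Proof.
rewrite mulmx_sumr mulmx_suml summxE; apply: sumr_ge0 => j _.
have -> : v *m ((X j)^t* *m X j) *m v^t* = (v *m (X j)^t*) *m (v *m (X j)^t*)^t*.
  by rewrite trmx_mul map_mxM trmxCK !mulmxA.
exact: gram_ge0.
Qed.

Lemma sqrt_gram (C : numClosedFieldType) m (Y A : 'M[C]_m) :
  psdmx Y /\ Y *m Y = A -> Y^t* *m Y = A.
Proof.
move=> [[/is_hermitianmxP Yh _] <-].
by rewrite expr0 scale1r in Yh; rewrite -Yh.
Qed.

Theorem lemma5p10 (C : numClosedFieldType) (N n d : nat)
    (M : 'I_N -> 'M[C]_(d, n * d))
    (lam : 'I_(n * d) -> C) (nu : 'I_d -> C) :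
  char_poly (\sum_(j < N) (M j) ^t* *m M j) = \prod_(i < n * d) ('X - (lam i)%:P) ->
  char_poly (\sum_(j < N) M j *m (M j) ^t*) = \prod_(i < d) ('X - (nu i)%:P) ->
  \sum_(i < n * d) lam i = \sum_(j < d) nu j /\
  ((forall i, lam i <= d%:R^-1 * \sum_(j < d) nu j) ->
   forall p : nat, (2 <= p)%N ->
   forall (SA : 'M[C]_(n * d)) (SB : 'M[C]_d),
     is_psd_sqrt SA (\sum_(j < N) (M j) ^t* *m M j) ->
     is_psd_sqrt SB (\sum_(j < N) M j *m (M j) ^t*) ->
     schatten_2p_pow p SA <= schatten_2p_pow p SB).
Proof.
move=> hcA hcB.
have eB : \sum_j ((M j)^t*)^t* *m (M j)^t* = \sum_j M j *m (M j)^t*.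
  by apply: eq_bigr => j _; rewrite trmxCK.
have hB := gram_sum_herm (fun j => (M j)^t*); rewrite eB in hB.
have pB := gram_sum_psd (fun j => (M j)^t*); rewrite eB in pB.
have [lam0 trA] := spec_facts (gram_sum_herm M) (gram_sum_psd M) hcA.
have [nu0 trB] := spec_facts hB pB hcB.
have tr_eq : \tr (\sum_j (M j)^t* *m M j) = \tr (\sum_j M j *m (M j)^t*).
  rewrite !raddf_sum; apply: eq_bigr => j _; exact: mxtrace_mulC.
have sum_eq : \sum_i lam i = \sum_j nu j.
  have e1 := trA 1%N; have e2 := trB 1%N; rewrite !expr1 in e1 e2.
  rewrite (eq_bigr (fun i => lam i ^+ 1)); last by move=> i _; rewrite expr1.
  rewrite [RHS](eq_bigr (fun i => nu i ^+ 1)); last by move=> i _; rewrite expr1.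
  by rewrite -e1 -e2.
split => // hle p hp SA SB hSA hSB.
rewrite /schatten_2p_pow (sqrt_gram hSA) (sqrt_gram hSB) trA trB.
exact: scalar_main.
Qed.
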